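(* Let $\mathcal A=(Q,\Sigma,\delta,\rho)$ be a connected bireversible Mealy automaton whose labeled orbit tree $\mathfrak t(\mathcal A)$ has no active self-liftable branch, and let $\mathfrak j$ be a jungle tree of $\mathfrak t(\mathcal A)$. Then there is a constant $C$ depending only on $\mathfrak j$ such that for every cyclic $\mathfrak j$-word $\mathbf u$, the map $\rho_{\mathbf u}$ has finite order at most $C$.
   Context: Mealy automata. A Mealy automaton is $\mathcal A=(Q,\Sigma,\delta,\rho)$ with $Q,\Sigma$ finite non-empty sets, $\delta=(\delta_i\colon Q\to Q)_{i\in\Sigma}$, $\rho=(\rho_x\colon\Sigma\to\Sigma)_{x\in Q}$; it has a transition $x\xrightarrow{i\mid\rho_x(i)}\delta_i(x)$ for each $x,i$. It is invertible if each $\rho_x$ is a permutation of $\Sigma$, reversible if each $\delta_i$ is a permutation of $Q$, bireversible if it is invertible, reversible, and for each $j\in\Sigma$ the map $x\mapsto\delta_{\rho_x^{-1}(j)}(x)$ is a permutation of $Q$. It is connected if the directed graph on $Q$ with edges $x\to\delta_i(x)$ is connected. Extensions: $\rho_x(i\mathbf s)=\rho_x(i)\rho_{\delta_i(x)}(\mathbf s)$ on $\Sigma^*$; for $\mathbf u=x_1\cdots x_m\in Q^m$, $\rho_{\mathbf u}=\rho_{x_m}\circ\cdots\circ\rho_{x_1}$; dually $\delta_i(x\mathbf u)=\delta_i(x)\delta_{\rho_x(i)}(\mathbf u)$ on $Q^*$ and $\delta_{i_1\cdots i_m}=\delta_{i_m}\circ\cdots\circ\delta_{i_1}$. The $n$-th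 power $\mathcal A^n$ has stateset $Q^n$ and transitions $\mathbf u\xrightarrow{i\mid\rho_{\mathbf u}(i)}\delta_i(\mathbf u)$; for reversible $\mathcal A$ its connected components are the orbits of $Q^n$ under the maps $\delta_{\mathbf s}$, $\mathbf s\in\Sigma^*$. Orbit tree. For reversible $\mathcal A$, $\mathfrak t(\mathcal A)$ is the rooted tree whose vertices at level $n\ge0$ are the connected components of $\mathcal A^n$ (level $0$: the single component of the empty word), with an edge from the component of $\mathbf u\in Q^n$ to the component of $\mathbf ux$ for all $\mathbf u\in Q^n$, $x\in Q$; the edge $C\to D$ is labeled by the integer $\#D/\#C$. Paths go downward; $\top$ and $\bot$ denote the first and last vertex of a path; the level of an edge or path is the level of its top vertex. A word in $Q^*\cup Q^\omega$ represents the initial path (starting at the root) through the components of its prefixes. An edge $e$ is liftable to an edge $f$ if every word of $\bot(e)$ has a suffix in $\bot(f)$; a path $(e_i)_{i\in I}$ is liftable to a path $(f_i)_{i\in I}$ of the same length if each $e_i$ is liftable to $f_i$. An edge $f$ is a legitimate child of an edge $e$ if $\top(f)=\bot(e)$ and $f$ is liftable to $e$. A path or subtree $\mathfrak s$ is $k$-self-liftable ($k>0$) if for every $i\ge0$ every path in $\mathfrak s$ starting at level $i+k$ is liftable to a path in $\mathfrak s$ starting at level $i$; self-liftable if $k$-self-liftable for some $k>0$. A branch is an infinite initial path; it is active if its sequence of labels is not eventually constantly $1$. Jungle trees. Let $\mathbf e$ be a finite 1-self-liftable initial path of length $n$ whose last edge has at least two legitimate children, all of label $1$. The jungle tree $\mathfrak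 j(\mathbf e)$ is the subtree consisting of $\mathbf e$ (its trunk) together with all edges that are descendants of $\bot(\mathbf e)$ and liftable to the last edge of $\mathbf e$. A jungle tree is a tree of this form. A $\mathfrak j$-word is a word of $Q^*\cup Q^\omega$ representing an initial path of $\mathfrak j$; a cyclic $\mathfrak j$-word is a word $\mathbf u\in Q^*$ all of whose powers $\mathbf u^m$ ($m\ge1$) are $\mathfrak j$-words. *)

(* Defs.v *)
From mathcomp Require Import all_boot.
From mathcomp Require Import boolp.
Set Implicit Arguments. Unset Strict Implicit. Unset Printing Implicit Defensive.

Section Mealy.
Variables (Q S : finType) (delta : S -> Q -> Q) (rho : Q -> S -> S).

(* Mealy automaton A = (Q, S, delta, rho): transition x --i|rho x i--> delta i x *)

Definition invertible := forall x, bijective (rho x).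
Definition reversible := forall i, bijective (delta i).
Definition bireversible :=
  [/\ invertible, reversible &
      forall rinv : Q -> S -> S, (forall x, cancel (rho x) (rinv x)) ->
      forall j, bijective (fun x => delta (rinv x j) x)].

Definition connected :=
  forall x y, connect (fun a b => [exists i, (delta i a == b) || (delta i b == a)]) x y.

Fixpoint rhoW (x : Q) (s : seq S) : seq S :=
  if s is i :: s' then rho x i :: rhoW (delta i x) s' else [::].
(* rho_u = rho_{x_m} o ... o rho_{x_1} for u = x_1 ... x_m *)
Definition rhoU (u : seq Q) (s : seq S) : seq S := foldl (fun s x => rhoW x s) s u.

Fixpoint deltaW (i : S) (u : seq Q) : seq Q :=
  if u is x :: u' then delta i x :: deltaW (rho x i) u' else [::].
(* delta_{i_1...i_m} = delta_{i_m} o ... o delta_{i_1} *)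
Definition deltaS (s : seq S) (u : seq Q) : seq Q := foldl (fun u i => deltaW i u) u s.

(* v lies in the connected component of u in A^(size u)
   (for reversible A: the orbit of u under the maps delta_s) *)
Definition reach (u v : seq Q) : Prop := exists s : seq S, deltaS s u = v.

Definition comp_card (u : seq Q) : nat :=
  #|[set v : (size u).-tuple Q | `[< reach u v >] ]|.

(* Edges of the orbit tree are identified by their bottom vertex: the edge
   with bottom the component of a nonempty word w goes from the component of
   the prefix of w of length (size w - 1) to the component of w. *)
Definition label (w : seq Q) : nat := comp_card w %/ comp_card (take (size w).-1 w).

Definition edge_liftable (b c : seq Q) : Prop :=
  forall v, reach b v -> exists k, reach c (drop k v).

(* A set of edges is a predicate on words (bottom representatives).
   The path of length m starting at level i ending at the component of w
   (size w = i + m) lies in E. *)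
Definition path_in (E : seq Q -> Prop) (w : seq Q) (i m : nat) : Prop :=
  size w = i + m /\ forall j, i <= j < i + m -> E (take j.+1 w).

Definition path_lift (w : seq Q) (i : nat) (w' : seq Q) (i' m : nat) : Prop :=
  forall t, t < m -> edge_liftable (take (i + t).+1 w) (take (i' + t).+1 w').

Definition k_self_liftable (E : seq Q -> Prop) (k : nat) : Prop :=
  forall i m w, path_in E w (i + k) m ->
    exists w', path_in E w' i m /\ path_lift w (i + k) w' i m.

Definition self_liftable (E : seq Q -> Prop) : Prop :=
  exists k, 0 < k /\ k_self_liftable E k.

(* branch represented by an infinite word X *)
Definition branch (X : nat -> Q) : seq Q -> Prop :=
  fun w => 0 < size w /\ reach (mkseq X (size w)) w.

Definition active (X : nat -> Q) : Prop :=
  ~ (exists N, forall n, N <= n -> label (mkseq X n.+1) = 1).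

Definition no_active_self_liftable_branch : Prop :=
  forall X : nat -> Q, ~ (active X /\ self_liftable (branch X)).

(* the finite initial path represented by a (the trunk) *)
Definition trunk (a : seq Q) : seq Q -> Prop :=
  fun w => 0 < size w <= size a /\ reach (take (size w) a) w.

Definition legit_child (a w : seq Q) : Prop :=
  size w = (size a).+1 /\ reach a (take (size a) w) /\ edge_liftable w a.

Definition jungle_trunk (a : seq Q) : Prop :=
  [/\ 0 < size a,
      k_self_liftable (trunk a) 1,
      (exists w1 w2, [/\ legit_child a w1, legit_child a w2 & ~ reach w1 w2]) &
      (forall w, legit_child a w -> label w = 1)].

(* the jungle tree j(e): trunk plus descendant edges of bot(e) liftable to
   the last edge of e *)
Definition jungle (a : seq Q) : seq Q -> Prop :=
  fun w => trunk a w \/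
    [/\ size a < size w, reach a (take (size a) w) & edge_liftable w a].

Definition jword (a u : seq Q) : Prop :=
  forall t, 0 < t <= size u -> jungle a (take t u).

Definition cyclic_jword (a u : seq Q) : Prop :=
  forall m, 0 < m -> jword a (flatten (nseq m u)).

End Mealy.

(* Main.v *)
Require Import Defs.
From mathcomp Require Import all_boot.
From mathcomp Require Import boolp.
From mathcomp Require Import zify.
Set Implicit Arguments. Unset Strict Implicit. Unset Printing Implicit Defensive.

Section Aux.
Variables (Q S : finType) (delta : S -> Q -> Q) (rho : Q -> S -> S).

Local Notation dS := (deltaS delta rho).
Local Notation rU := (rhoU delta rho).
Local Notation rW := (rhoW delta rho).
Local Notation dW := (deltaW delta rho).

Definition lastst (x : Q) (s : seq S) := foldl (fun x i => delta i x) x s.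

Lemma size_rW x s : size (rW x s) = size s.
Proof. by elim: s x => [|i s IH] x //=; rewrite IH. Qed.

Lemma size_rU u s : size (rU u s) = size s.
Proof. by elim: u s => [|x u IH] s //=; rewrite /rhoU /= -/(rhoU _ _ _ _) IH size_rW. Qed.

Lemma size_dW i u : size (dW i u) = size u.
Proof. by elim: u i => [|x u IH] i //=; rewrite IH. Qed.

Lemma size_dS s u : size (dS s u) = size u.
Proof. by elim: s u => [|i s IH] u //=; rewrite /deltaS /= -/(deltaS _ _ _ _) IH size_dW. Qed.

Lemma dS_cons i s u : dS (i :: s) u = dS s (dW i u).
Proof. by []. Qed.

Lemma rU_cons x u s : rU (x :: u) s = rU u (rW x s).
Proof. by []. Qed.

Lemma dS_cat s t u : dS (s ++ t) u = dS t (dS s u).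
Proof. by rewrite /deltaS foldl_cat. Qed.

Lemma rU_cat u v s : rU (u ++ v) s = rU v (rU u s).
Proof. by rewrite /rhoU foldl_cat. Qed.

Lemma rW_cat x s t : rW x (s ++ t) = rW x s ++ rW (lastst x s) t.
Proof. by elim: s x => [|i s IH] x //=; rewrite IH. Qed.

Lemma dS_consQ s x u : dS s (x :: u) = lastst x s :: dS (rW x s) u.
Proof.
elim: s x u => [|i s IH] x u //=.
Qed.

Lemma dS_nil s : dS s [::] = [::].
Proof. by apply/size0nil; rewrite size_dS. Qed.

Lemma rU_cat2 u s t : rU u (s ++ t) = rU u s ++ rU (dS s u) t.
Proof.
elim: u s t => [|x u IH] s t; first by rewrite dS_nil.
by rewrite !rU_cons rW_cat IH dS_consQ.
Qed.

Lemma dS_catQ s p q : dS s (p ++ q) = dS s p ++ dS (rU p s) q.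
Proof.
elim: p s => [|x p IH] s /=; first by rewrite dS_nil.
by rewrite !dS_consQ IH.
Qed.

Lemma take_dS L s y : take L (dS s y) = dS s (take L y).
Proof.
case: (leqP L (size y)) => h.
  rewrite -{1}(cat_take_drop L y) dS_catQ take_size_cat //.
  by rewrite size_dS size_takel.
by rewrite !take_oversize ?size_dS // ltnW.
Qed.

Lemma drop_dS L s y : exists s', drop L (dS s y) = dS s' (drop L y).
Proof.
case: (leqP L (size y)) => h.
  exists (rU (take L y) s).
  rewrite -{1}(cat_take_drop L y) dS_catQ drop_size_cat //.
  by rewrite size_dS size_takel.
exists [::]; rewrite !drop_oversize ?size_dS ?dS_nil //; exact: ltnW.
Qed.

Lemma iter_rU k u s : iter k (rU u) s = rU (flatten (nseq k u)) s.
Proof.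
elim: k s => [|k IH] s //.
by rewrite iterSr IH /= rU_cat.
Qed.

Lemma reach_refl u : reach delta rho u u.
Proof. by exists [::]. Qed.

Lemma reach_trans u v w : reach delta rho u v -> reach delta rho v w -> reach delta rho u w.
Proof. by move=> [s <-] [t <-]; exists (s ++ t); rewrite dS_cat. Qed.

Lemma reach_size u v : reach delta rho u v -> size v = size u.
Proof. by move=> [s <-]; rewrite size_dS. Qed.


Lemma dW_inj (hinj : forall i, injective (delta i)) i u v : dW i u = dW i v -> u = v.
Proof.
elim: u i v => [|x u IH] i [|y v] //= [hxy h].
have exy := hinj _ _ _ hxy; subst y.
by rewrite (IH _ _ h).
Qed.

Lemma dS_inj (hinj : forall i, injective (delta i)) s u v : dS s u = dS s v -> u = v.
Proof.
elim: s u v => [|i s IH] u v //=.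
move=> /IH; exact: dW_inj.
Qed.

Lemma tF_proof s n (t : n.-tuple Q) : size (dS s t) == n.
Proof. by rewrite size_dS size_tuple. Qed.

Definition tF s n (t : n.-tuple Q) : n.-tuple Q := Tuple (tF_proof s t).

Lemma iter_tF s n k (t : n.-tuple Q) : val (iter k (@tF s n) t) = dS (flatten (nseq k s)) t.
Proof.
elim: k t => [|k IH] t //.
by rewrite iterSr IH /= dS_cat.
Qed.

Lemma reach_sym (hinj : forall i, injective (delta i)) u v :
  reach delta rho u v -> reach delta rho v u.
Proof.
move=> [s <-].
set t := in_tuple u.
have Finj : injective (@tF s (size u)).
  by move=> t1 t2 /(congr1 val) /= /dS_inj => /(_ hinj) /val_inj.
have h : fconnect (@tF s (size u)) (tF s t) t by rewrite fconnect_sym // fconnect1.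
have := congr1 val (iter_findex h).
rewrite iter_tF /= => E.
by exists (flatten (nseq (findex (@tF s (size u)) (tF s t) t) s)).
Qed.

Lemma child_inj (hinj : forall i, injective (delta i)) c n :
  size c = n.+1 -> label delta rho c = 1 ->
  forall s1 t1, take n (dS s1 c) = take n (dS t1 c) -> dS s1 c = dS t1 c.
Proof.
move=> hc hl s1 t1 htk.
case: (eqVneq (dS s1 c) (dS t1 c)) => // hne; exfalso.
set q := take n c.
set q' := take n (dS s1 c).
have hq' : dS s1 q = q' by rewrite /q' take_dS.
pose CQ := [set v : (size q).-tuple Q | `[< reach delta rho q v >] ].
pose CC := [set v : (size c).-tuple Q | `[< reach delta rho c v >] ].
have hlab : label delta rho c = #|CC| %/ #|CQ|.
  have e : (size c).-1 = n by rewrite hc.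
  by rewrite /label e.
pose r (v : seq Q) : seq S :=
  match pselect (exists s, dS s q' == v) with left H => xchoose H | right _ => [::] end.
have hr : forall p, p \in CQ -> dS (r p) q' = p.
  move=> p; rewrite inE => /asboolP hp.
  have ex : exists s, dS s q' == p.
    have : reach delta rho q' p.
      apply: reach_trans hp; apply: reach_sym => //; by exists s1.
    by move=> [s hs]; exists s; apply/eqP.
  rewrite /r; case: pselect => // H; exact/eqP/(xchooseP H).
pose te (b : bool) := tF (if b then t1 else s1) (in_tuple c).
pose g (pb : (size q).-tuple Q * bool) := tF (r pb.1) (te pb.2).
have htake : forall p b, take n (val (g (p, b))) = dS (r p) q'.
  move=> p b; rewrite /= take_dS /=; case: b => //=.
  by rewrite /q' htk.
have ginj : {in setX CQ [set: bool] &, injective g}.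
  move=> [p1 b1] [p2 b2] /setXP [h1 _] /setXP [h2 _] E.
  have Ep : p1 = p2.
    have := congr1 (fun x => take n (val x)) E.
    by rewrite /= !htake (hr _ h1) (hr _ h2) => /val_inj.
  subst p2.
  have := congr1 val E; rewrite /= => /(dS_inj hinj) => Eb.
  by move: E Eb; case: b1; case: b2 => //= _ Eb; move: hne; rewrite Eb eqxx.
have sub : g @: (setX CQ [set: bool]) \subset CC.
  apply/subsetP => _ /imsetP [[p b] _ ->]; rewrite inE; apply/asboolP.
  apply: (@reach_trans _ (te b)); first by exists (if b then t1 else s1).
  by exists (r p).
have := subset_leq_card sub; rewrite card_in_imset // cardsX cardsT card_bool => hle.
have pos : 0 < #|CQ|.
  by apply/card_gt0P; exists (in_tuple q); rewrite inE; apply/asboolP; exact: reach_refl.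
have : 2 <= #|CC| %/ #|CQ|.
  by rewrite -(mulnK 2 pos) mulnC leq_div2r.
by rewrite -hlab hl.
Qed.

Lemma win a w : 0 < size a -> jword delta rho a w ->
  forall L, size a <= L <= size w -> reach delta rho a (drop (L - size a) (take L w)).
Proof.
move=> hn hj L /andP [hL1 hL2].
have hsz : size (take L w) = L by rewrite size_takel.
have := hj L; rewrite hL2 andbT => /(_ (leq_trans hn hL1)).
case=> [[hs hr] | [hlt hr hel]].
  rewrite hsz in hs hr.
  have eL : L = size a by case/andP: hs => _ h; lia.
  by rewrite eL subnn drop0 take_oversize // -eL in hr *.
have [k hk] := hel _ (reach_refl _).
have := reach_size hk; rewrite size_drop hsz => e.
have -> : L - size a = k by lia.
exact: hk.
Qed.

Lemma legit a w : 0 < size a -> jword delta rho a w ->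
  forall L, size a <= L -> L < size w ->
  legit_child delta rho a (drop (L - size a) (take L.+1 w)).
Proof.
move=> hn hj L hL1 hL2.
split.
  rewrite size_drop size_takel //; lia.
split.
  rewrite take_drop (_ : size a + (L - size a) = L); last by lia.
  rewrite take_takel //; apply: win => //; rewrite hL1 /=; exact: ltnW.
move=> v [r <-]; exists 1.
have [s' ->] := drop_dS 1 r (drop (L - size a) (take L.+1 w)).
apply: (@reach_trans _ (drop 1 (drop (L - size a) (take L.+1 w)))); last by exists s'.
rewrite drop_drop (_ : 1 + (L - size a) = L.+1 - size a); last by lia.
apply: win => //; rewrite hL2; lia.
Qed.

Lemma prefix_inj a w : (forall i, injective (delta i)) -> 0 < size a ->
  jword delta rho a w ->
  (forall c, legit_child delta rho a c -> label delta rho c = 1) ->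
  forall d, size a + d <= size w -> forall s t,
  take (size a) (dS s (take (size a + d) w)) = take (size a) (dS t (take (size a + d) w)) ->
  dS s (take (size a + d) w) = dS t (take (size a + d) w).
Proof.
move=> hinj hn hj hlab; set n := size a.
elim=> [|d IH] hd s t.
  by rewrite addn0 !take_dS take_takel.
set L := n + d.
rewrite addnS => htk.
set p0 := take d w.
set c := drop d (take L.+1 w).
have hLw : L < size w by rewrite /L -addnS.
have e1 : take L.+1 w = p0 ++ c.
  by rewrite -{1}(cat_take_drop d (take L.+1 w)) take_takel // /L; lia.
have e2 : take L w = p0 ++ take n c.
  rewrite /c take_drop (_ : n + d = L) // take_takel //.
  by rewrite -{1}(cat_take_drop d (take L w)) take_takel // /L; lia.
have hIH : dS s (take L w) = dS t (take L w).
  apply: IH; first exact: ltnW.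
  have hnL : n <= L by rewrite /L leq_addr.
  have hnL1 : n <= L.+1 by lia.
  move: htk; rewrite !take_dS (take_takel _ hnL) take_takel //.
move: hIH htk; rewrite e1 e2 !dS_catQ => /eqP.
rewrite eqseq_cat ?size_dS // => /andP [/eqP hp /eqP hc] _.
rewrite hp; congr (_ ++ _).
have hc' : size c = n.+1.
  rewrite size_drop size_takel //; lia.
apply: (child_inj hinj hc').
  apply: hlab; rewrite /c (_ : d = L - n); last by rewrite /L; lia.
  by apply: legit => //; rewrite /L; lia.
by rewrite !take_dS hc.
Qed.

Lemma rW_inj (rinj : forall x, injective (rho x)) x s t : rW x s = rW x t -> s = t.
Proof.
elim: s x t => [|i s IH] x [|j t] //= [hij h].
have eij := rinj _ _ _ hij; subst j.
by rewrite (IH _ _ h).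
Qed.

Lemma rU_inj (rinj : forall x, injective (rho x)) u s t : rU u s = rU u t -> s = t.
Proof.
elim: u s t => [|x u IH] s t //=.
move=> /IH; exact: rW_inj.
Qed.

Lemma tR_proof u D (t : D.-tuple S) : size (rU u t) == D.
Proof. by rewrite size_rU size_tuple. Qed.

Definition tR u D (t : D.-tuple S) : D.-tuple S := Tuple (tR_proof u t).

Lemma iter_tR u D k (t : D.-tuple S) : val (iter k (@tR u D) t) = iter k (rU u) t.
Proof. by elim: k t => [|k IH] t //=; rewrite IH. Qed.

Lemma iter_mul_fix (T : Type) (f : T -> T) x m k : iter m f x = x -> iter (k * m) f x = x.
Proof. by move=> h; elim: k => [|k IH] //; rewrite mulSn iterD IH h. Qed.

Lemma fixD (rinj : forall x, injective (rho x)) u D (t : D.-tuple S) :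
  iter (#|{: D.-tuple S}|`!) (rU u) t = t.
Proof.
have finj : injective (@tR u D).
  by move=> t1 t2 /(congr1 val) /= /(rU_inj rinj) /val_inj.
have ho := iter_order finj t.
have hdv : order (@tR u D) t %| #|{: D.-tuple S}|`!.
  by apply: dvdn_fact; rewrite order_gt0 /order max_card.
have [k ->] := dvdnP hdv.
rewrite -iter_tR; congr val; exact: iter_mul_fix.
Qed.

End Aux.

Theorem proposition5p3 (Q S : finType) (delta : S -> Q -> Q) (rho : Q -> S -> S) :
  0 < #|Q| -> 0 < #|S| ->
  bireversible delta rho -> connected delta ->
  no_active_self_liftable_branch delta rho ->
  forall a : seq Q, jungle_trunk delta rho a ->
  exists C : nat, forall u : seq Q, cyclic_jword delta rho a u ->
    exists k, 0 < k <= C /\ forall s : seq S, iter k (rhoU delta rho u) s = s.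
Proof.
move=> hQ hS [hinv hrev _] _ _ a [hn _ _ hlab].
have hinj : forall i, injective (delta i) by move=> i; apply: bij_inj.
have rinj : forall x, injective (rho x) by move=> x; apply: bij_inj.
set n := size a.
set D := #|Q| ^ n.
set P0 := #|{: D.-tuple S}|`!.
have P0pos : 0 < P0 by rewrite fact_gt0.
exists (n.+1 * P0) => u hu.
have Cpos : 0 < n.+1 * P0 by rewrite muln_gt0.
case: u hu => [|x0 u0] hu.
  by exists 1; split; [rewrite Cpos | ].
set u := x0 :: u0.
exists (n.+1 * P0); split; first by rewrite Cpos leqnn.
set C := n.+1 * P0.
set W := flatten (nseq C u).
have hW : jword delta rho a W := hu C Cpos.
have hszW : n < size W.
  rewrite /W size_flatten /shape map_nseq sumn_nseq /=.
  have h1 : n.+1 <= C by rewrite /C; nia.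
  have h2 : 0 < size u by [].
  nia.
move=> s; rewrite iter_rU -/W.
have stepA : forall s, size s <= D -> rhoU delta rho W s = s.
  move=> s1 hs1.
  case: s1 hs1 => [|i0 s1'] hs1; first by apply/size0nil; rewrite size_rU.
  set s1 := i0 :: s1'.
  set pad := nseq (D - size s1) i0.
  have hsz : size (s1 ++ pad) == D by rewrite size_cat size_nseq subnKC.
  have fx : rhoU delta rho W (s1 ++ pad) = s1 ++ pad.
    rewrite /W -iter_rU /C.
    have := fixD delta rinj u (Tuple hsz) => /= h.
    exact: iter_mul_fix h.
  have := congr1 (take (size s1)) fx.
  by rewrite rU_cat2 !take_size_cat // size_rU.
suff : forall M s, size s <= D + M -> rhoU delta rho W s = s.
  by move/(_ (size s) s); apply; rewrite leq_addl.
elim=> [|M IH] z hz; first by apply: stepA; rewrite addn0 in hz.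
case: (leqP (size z) (D + M)) => hzM; first exact: IH.
have ez : size z = (D + M).+1 by apply/eqP; rewrite eqn_leq hzM; rewrite addnS in hz; rewrite hz.
case: (eqVneq (rhoU delta rho W z) z) => // hne; exfalso.
pose v (j : 'I_D.+1) := deltaS delta rho (take j z) W.
have hsec : forall (j : 'I_D.+1) t,
    rhoU delta rho W (take j z ++ t) = take j z ++ rhoU delta rho (v j) t.
  move=> j t; rewrite rU_cat2 IH //.
  rewrite size_takel; last by rewrite ez; have := ltn_ord j; lia.
  have := ltn_ord j; lia.
have hmove : forall j : 'I_D.+1, rhoU delta rho (v j) (drop j z) != drop j z.
  move=> j; apply: contra hne => /eqP h.
  by rewrite -{1}(cat_take_drop j z) hsec h cat_take_drop.
have vinj : injective v.
  have key : forall i j : 'I_D.+1, i < j -> v i = v j -> False.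
    move=> i j hij hv.
    have := hmove j; rewrite -hv.
    have hfix := IH (take i z ++ drop j z).
    rewrite hsec in hfix.
    have : size (take i z ++ drop j z) <= D + M.
      rewrite size_cat size_drop size_takel ez; have := ltn_ord j; lia.
    move=> /hfix /eqP; rewrite eqseq_cat // => /andP [_ /eqP ->].
    by rewrite eqxx.
  move=> i j hv; case: (ltngtP i j) => hij.
  - by exfalso; exact: key hij hv.
  - by exfalso; exact: key hij (esym hv).
  - exact: val_inj.
have hszv : forall j, size (take n (v j)) == n.
  by move=> j; rewrite size_takel // size_dS ltnW.
pose f (j : 'I_D.+1) : n.-tuple Q := Tuple (hszv j).
have finj : injective f.
  move=> i j /(congr1 val) /= h; apply: vinj.
  have e : take (n + (size W - n)) W = W by rewrite subnKC ?take_size // ltnW.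
  have hle : n + (size W - n) <= size W by rewrite subnKC // ltnW.
  have H := @prefix_inj _ _ delta rho a W hinj hn hW hlab (size W - n) hle (take i z) (take j z).
  rewrite e in H; exact: H.
have := @leq_card _ _ f finj; rewrite card_ord card_tuple -/D.
by rewrite ltnn.
Qed.
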